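(* $\mathcal C_q^{\infty,\infty,4,3}\neq\mathcal C_{qs}^{\infty,\infty,4,3}$.
   Context: A strategy: Hilbert spaces $\mathcal H_A,\mathcal H_B$ (possibly infinite-dimensional), a unit vector $|\psi\rangle\in\mathcal H_A\otimes\mathcal H_B$, and for each question a projective measurement $\{A^a_x\}_{a}$ on $\mathcal H_A$, $\{B^b_y\}_{b}$ on $\mathcal H_B$, producing $p(a,b|x,y)=\langle\psi|A^a_x\otimes B^b_y|\psi\rangle$. $\mathcal C_{qs}^{\infty,\infty,4,3}$ is the set of correlations with countably infinite question sets and answer sets of sizes 4 (Alice) and 3 (Bob) produced by some strategy; $\mathcal C_{q}^{\infty,\infty,4,3}$ is the subset produced by strategies whose state $|\psi\rangle$ has finite Schmidt rank. *)

(* Defs.v *)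
(* Hilbert spaces are modelled concretely as
   l^2(I) over complex numbers for an arbitrary index type I (every Hilbert
   space is isometric to some l^2(I)); the tensor product l^2(I) (x) l^2(J) is
   l^2(I * J). *)
From Stdlib Require Import Reals List.
Import ListNotations.
Open Scope R_scope.

Record C : Type := mkC { Re : R ; Im : R }.
Definition Cadd (z w : C) : C := mkC (Re z + Re w) (Im z + Im w).
Definition Cmul (z w : C) : C :=
  mkC (Re z * Re w - Im z * Im w) (Re z * Im w + Im z * Re w).
Definition Cconj (z : C) : C := mkC (Re z) (- Im z).
Definition Cnorm2 (z : C) : R := Re z * Re z + Im z * Im z.
Definition C0 : C := mkC 0 0.

Fixpoint Csum (n : nat) (f : nat -> C) : C :=
  match n with
  | O => C0
  | S m => Cadd (Csum m f) (f m)
  end.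

(* has_sum_R f s : the net of finite partial sums (over finite subsets, given as
   duplicate-free lists) converges to s. *)
Definition has_sum_R {T : Type} (f : T -> R) (s : R) : Prop :=
  forall eps : R, eps > 0 ->
    exists L0 : list T, forall L : list T, NoDup L -> incl L0 L ->
      Rabs (fold_right Rplus 0 (map f L) - s) < eps.

Definition has_sum_C {T : Type} (f : T -> C) (s : C) : Prop :=
  has_sum_R (fun t => Re (f t)) (Re s) /\ has_sum_R (fun t => Im (f t)) (Im s).

Definition l2 {I : Type} (u : I -> C) : Prop :=
  exists s : R, has_sum_R (fun i => Cnorm2 (u i)) s.

Definition inner {I : Type} (u v : I -> C) (z : C) : Prop :=
  has_sum_C (fun i => Cmul (Cconj (u i)) (v i)) z.

Definition unit_vector {I : Type} (u : I -> C) : Prop :=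
  has_sum_R (fun i => Cnorm2 (u i)) 1.

(* operators on l^2(I) (only their action on l^2 vectors matters) *)
Definition op (I : Type) : Type := (I -> C) -> (I -> C).

Definition is_projection {I : Type} (P : op I) : Prop :=
  (forall u, l2 u -> l2 (P u)) /\
  (forall u v, l2 u -> l2 v -> forall i,
       P (fun k => Cadd (u k) (v k)) i = Cadd (P u i) (P v i)) /\
  (forall (c : C) u, l2 u -> forall i,
       P (fun k => Cmul c (u k)) i = Cmul c (P u i)) /\
  (forall u, l2 u -> forall i, P (P u) i = P u i) /\
  (forall u v z, l2 u -> l2 v -> inner (P u) v z -> inner u (P v) z).

Definition PVM_family {I : Type} (n : nat) (M : nat -> nat -> op I) : Prop :=
  (forall x a, (a < n)%nat -> is_projection (M x a)) /\
  (forall x u, l2 u -> forall i, Csum n (fun a => M x a u i) = u i).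

Definition tensor_apply {I J : Type} (A : op I) (B : op J) (psi : I * J -> C)
  : I * J -> C :=
  fun ij => A (fun i' => B (fun j' => psi (i', j')) (snd ij)) (fst ij).

Definition produces {I J : Type} (nA nB : nat) (psi : I * J -> C)
  (A : nat -> nat -> op I) (B : nat -> nat -> op J)
  (p : nat -> nat -> nat -> nat -> R) : Prop :=
  unit_vector psi /\ PVM_family nA A /\ PVM_family nB B /\
  forall x y a b, (a < nA)%nat -> (b < nB)%nat ->
    inner psi (tensor_apply (A x a) (B y b) psi) (mkC (p x y a b) 0).

Definition finite_schmidt_rank {I J : Type} (psi : I * J -> C) : Prop :=
  exists (r : nat) (u : nat -> I -> C) (v : nat -> J -> C),
    (forall k, (k < r)%nat -> l2 (u k) /\ l2 (v k)) /\
    forall i j, psi (i, j) = Csum r (fun k => Cmul (u k i) (v k j)).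

(* Correlations p x y a b (questions x, y : nat, countably infinite; only the
   values with a < nA, b < nB are meaningful; other values are unconstrained). *)
Definition C_qs (nA nB : nat) (p : nat -> nat -> nat -> nat -> R) : Prop :=
  exists (I J : Type) (psi : I * J -> C) (A : nat -> nat -> op I)
         (B : nat -> nat -> op J), produces nA nB psi A B p.

Definition C_q (nA nB : nat) (p : nat -> nat -> nat -> nat -> R) : Prop :=
  exists (I J : Type) (psi : I * J -> C) (A : nat -> nat -> op I)
         (B : nat -> nat -> op J),
    produces nA nB psi A B p /\ finite_schmidt_rank psi.

(* Main.v *)
Require Import Defs.
From Stdlib Require Import Reals Lra Lia List Classical ClassicalEpsilon FunctionalExtensionality.
Import ListNotations.
Import Defs.
Open Scope R_scope.

Definition myeps {A : Type} (a : A) (P : A -> Prop) : A :=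
  proj1_sig (constructive_indefinite_description (fun x => (exists y, P y) -> P x)
    (match classic (exists y, P y) with
     | or_introl H => match H with ex_intro _ y Hy => ex_intro _ y (fun _ => Hy) end
     | or_intror H => ex_intro _ a (fun H' => False_ind _ (H H'))
     end)).
Lemma myeps_spec {A : Type} (a : A) (P : A -> Prop) : (exists y, P y) -> P (myeps a P).
Proof. intros H. unfold myeps. destruct (constructive_indefinite_description _ _) as [x Hx]. simpl. auto. Qed.

Definition Ssum {T} (f : T -> R) (L : list T) : R := fold_right Rplus 0 (map f L).

Lemma Ssum_nil {T} (f : T -> R) : Ssum f [] = 0.
Proof. reflexivity. Qed.
Lemma Ssum_cons {T} (f : T -> R) a L : Ssum f (a :: L) = f a + Ssum f L.
Proof. reflexivity. Qed.

Lemma Ssum_app {T} (f : T -> R) l1 l2 : Ssum f (l1 ++ l2) = Ssum f l1 + Ssum f l2.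
Proof. induction l1; simpl; rewrite ?Ssum_cons, ?Ssum_nil; unfold Ssum in *; simpl in *; lra. Qed.

Lemma Ssum_plus {T} (f g : T -> R) L : Ssum (fun t => f t + g t) L = Ssum f L + Ssum g L.
Proof. induction L; unfold Ssum in *; simpl in *; lra. Qed.

Lemma Ssum_scal {T} c (f : T -> R) L : Ssum (fun t => c * f t) L = c * Ssum f L.
Proof. induction L; unfold Ssum in *; simpl in *; [lra|rewrite IHL; ring]. Qed.

Lemma Ssum_zero {T} (f : T -> R) L : (forall t, In t L -> f t = 0) -> Ssum f L = 0.
Proof.
  induction L; intros H; unfold Ssum in *; simpl in *; [lra|].
  rewrite H by auto. rewrite IHL by auto. lra.
Qed.

Lemma Ssum_le {T} (f g : T -> R) L : (forall t, f t <= g t) -> Ssum f L <= Ssum g L.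
Proof. intros H; induction L; unfold Ssum in *; simpl in *; [lra|]. specialize (H a); lra. Qed.

Lemma Ssum_nonneg {T} (f : T -> R) L : (forall t, 0 <= f t) -> 0 <= Ssum f L.
Proof. intros H; induction L; unfold Ssum in *; simpl in *; [lra|]. specialize (H a); lra. Qed.

Lemma Ssum_mono {T} (f : T -> R) L1 : (forall t, 0 <= f t) -> NoDup L1 ->
  forall L2, incl L1 L2 -> Ssum f L1 <= Ssum f L2.
Proof.
  intros Hf. induction L1 as [|a L1 IH]; intros HN L2 Hi.
  - rewrite Ssum_nil. apply Ssum_nonneg; auto.
  - assert (Ha : In a L2) by (apply Hi; left; auto).
    destruct (in_split _ _ Ha) as [l [l' E]]. subst L2.
    apply NoDup_cons_iff in HN. destruct HN as [Hn HN].
    assert (Hi' : incl L1 (l ++ l')).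
    { intros t Ht. assert (In t (l ++ a :: l')) by (apply Hi; right; auto).
      apply in_app_iff in H. apply in_app_iff. destruct H as [H|[H|H]]; auto.
      subst; contradiction. }
    specialize (IH HN _ Hi'). rewrite Ssum_cons, !Ssum_app, Ssum_cons.
    rewrite Ssum_app in IH. lra.
Qed.

Lemma nodup_sup {T} (L : list T) : exists L', NoDup L' /\ incl L L'.
Proof.
  induction L as [|a L [L' [HN Hi]]].
  - exists []. split; [constructor|intros t []].
  - destruct (classic (In a L')) as [Hin|Hnin].
    + exists L'. split; auto. intros t [<-|Ht]; auto.
    + exists (a :: L'). split; [constructor; auto|]. intros t [<-|Ht]; [left|right]; auto.
Qed.

Lemma Ssum_prod {I J} (f : I -> R) (g : J -> R) L1 L2 :
  Ssum (fun p => f (fst p) * g (snd p)) (list_prod L1 L2) = Ssum f L1 * Ssum g L2.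
Proof.
  induction L1 as [|a L1 IH]; simpl.
  - rewrite !Ssum_nil; ring.
  - rewrite Ssum_app, IH, Ssum_cons.
    assert (Ssum (fun p : I * J => f (fst p) * g (snd p)) (map (fun y => (a, y)) L2) = f a * Ssum g L2).
    { clear IH. induction L2; simpl; [rewrite !Ssum_nil; ring|].
      unfold Ssum in *; simpl in *. rewrite IHL2. ring. }
    rewrite H; ring.
Qed.

Lemma NoDup_prod {I J} (L1 : list I) (L2 : list J) : NoDup L1 -> NoDup L2 -> NoDup (list_prod L1 L2).
Proof.
  intros H1 H2. induction L1 as [|a L1 IH]; simpl; [constructor|].
  apply NoDup_cons_iff in H1. destruct H1 as [Hn H1].
  apply NoDup_app.
  - apply NoDup_map_NoDup_ForallPairs; auto.
    intros x y _ _ E. inversion E; auto.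
  - apply IH; auto.
  - intros p Hp Hp'. apply in_map_iff in Hp. destruct Hp as [y [<- _]].
    apply in_prod_iff in Hp'. destruct Hp'; auto.
Qed.
Notation HS := has_sum_R.
Ltac fS := repeat change (fold_right Rplus 0 (map ?f ?L)) with (Ssum f L) in *.

Lemma Rabs_lt_iff x e : Rabs x < e <-> (x < e /\ - e < x).
Proof. unfold Rabs; destruct (Rcase_abs x); split; intros; lra. Qed.

Lemma HS_ext {T} (f g : T -> R) s : (forall t, f t = g t) -> HS f s -> HS g s.
Proof. intros H. replace g with f; auto. apply functional_extensionality; auto. Qed.

Lemma incl_appl {T} (A B L : list T) : incl (A ++ B) L -> incl A L.
Proof. intros H t Ht. apply H, in_or_app; auto. Qed.
Lemma incl_appr {T} (A B L : list T) : incl (A ++ B) L -> incl B L.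
Proof. intros H t Ht. apply H, in_or_app; auto. Qed.

Lemma HS_unique {T} (f : T -> R) a b : HS f a -> HS f b -> a = b.
Proof.
  intros Ha Hb. destruct (Req_dec a b) as [|Hne]; auto. exfalso.
  set (e := Rabs (a - b) / 2).
  assert (He : e > 0).
  { unfold e. assert (a - b <> 0) by lra. apply Rabs_pos_lt in H. lra. }
  destruct (Ha e He) as [La HLa]. destruct (Hb e He) as [Lb HLb].
  destruct (nodup_sup (La ++ Lb)) as [L [HN Hi]].
  specialize (HLa L HN (incl_appl _ _ _ Hi)).
  specialize (HLb L HN (incl_appr _ _ _ Hi)).
  apply Rabs_lt_iff in HLa. apply Rabs_lt_iff in HLb.
  unfold e in *. unfold Rabs in *. destruct (Rcase_abs (a - b)); lra.
Qed.

Lemma HS_plus {T} (f g : T -> R) a b : HS f a -> HS g b -> HS (fun t => f t + g t) (a + b).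
Proof.
  intros Ha Hb e He.
  destruct (Ha (e/2) ltac:(lra)) as [La HLa]. destruct (Hb (e/2) ltac:(lra)) as [Lb HLb].
  exists (La ++ Lb). intros L HN Hi.
  specialize (HLa L HN (incl_appl _ _ _ Hi)).
  specialize (HLb L HN (incl_appr _ _ _ Hi)). fS.
  rewrite Ssum_plus. apply Rabs_lt_iff in HLa. apply Rabs_lt_iff in HLb.
  apply Rabs_lt_iff. lra.
Qed.

Lemma HS_scal {T} (f : T -> R) c a : HS f a -> HS (fun t => c * f t) (c * a).
Proof.
  intros Ha e He. destruct (Req_dec c 0) as [->|Hc].
  - exists []. intros L _ _. fS. rewrite Ssum_scal. apply Rabs_lt_iff. lra.
  - assert (Hc' : Rabs c > 0) by (apply Rabs_pos_lt; auto).
    destruct (Ha (e / Rabs c)) as [L0 HL0].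
    { apply Rdiv_lt_0_compat; lra. }
    exists L0. intros L HN Hi. specialize (HL0 L HN Hi). fS.
    rewrite Ssum_scal. replace (c * Ssum f L - c * a) with (c * (Ssum f L - a)) by ring.
    rewrite Rabs_mult.
    apply (Rmult_lt_compat_l (Rabs c)) in HL0; auto.
    replace (Rabs c * (e / Rabs c)) with e in HL0 by (field; lra). lra.
Qed.

Lemma HS_zero {T} : HS (fun _ : T => 0) 0.
Proof.
  intros e He. exists []. intros L _ _. fS. rewrite Ssum_zero by auto.
  apply Rabs_lt_iff; lra.
Qed.

Lemma HS_minus {T} (f g : T -> R) a b : HS f a -> HS g b -> HS (fun t => f t - g t) (a - b).
Proof.
  intros Ha Hb. apply (HS_scal _ (-1)) in Hb.
  eapply HS_ext; [|replace (a - b) with (a + -1 * b) by ring; apply (HS_plus _ _ _ _ Ha Hb)].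
  intros; simpl; ring.
Qed.

Lemma HS_upper {T} (f : T -> R) s : (forall t, 0 <= f t) -> HS f s ->
  forall L, NoDup L -> Ssum f L <= s.
Proof.
  intros Hf Hs L HN. destruct (Rle_dec (Ssum f L) s) as [|Hgt]; auto. exfalso.
  destruct (Hs (Ssum f L - s) ltac:(lra)) as [L0 HL0].
  destruct (nodup_sup (L0 ++ L)) as [L' [HN' Hi]].
  specialize (HL0 L' HN' (incl_appl _ _ _ Hi)). fS.
  assert (Ssum f L <= Ssum f L') by (apply Ssum_mono; auto; exact (incl_appr _ _ _ Hi)).
  apply Rabs_lt_iff in HL0. lra.
Qed.

Lemma HS_lower {T} (f : T -> R) s : HS f s ->
  forall e, e > 0 -> exists L, NoDup L /\ s - e < Ssum f L.
Proof.
  intros Hs e He. destruct (Hs e He) as [L0 HL0].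
  destruct (nodup_sup L0) as [L [HN Hi]]. exists L. split; auto.
  specialize (HL0 L HN Hi). fS. apply Rabs_lt_iff in HL0. lra.
Qed.

Lemma HS_from_sup {T} (f : T -> R) s : (forall t, 0 <= f t) ->
  (forall L, NoDup L -> Ssum f L <= s) ->
  (forall e, e > 0 -> exists L, NoDup L /\ s - e < Ssum f L) -> HS f s.
Proof.
  intros Hf Hu Hl e He. destruct (Hl e He) as [L0 [HN0 H0]].
  exists L0. intros L HN Hi. fS.
  assert (Ssum f L0 <= Ssum f L) by (apply Ssum_mono; auto).
  specialize (Hu L HN). apply Rabs_lt_iff. lra.
Qed.

Lemma HS_bounded {T} (f : T -> R) B : (forall t, 0 <= f t) ->
  (forall L, NoDup L -> Ssum f L <= B) -> exists s, HS f s.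
Proof.
  intros Hf HB.
  set (E := fun x => exists L, NoDup L /\ x = Ssum f L).
  assert (Hb : bound E) by (exists B; intros x [L [HN ->]]; auto).
  assert (Hne : exists x, E x) by (exists 0; exists []; split; [constructor|reflexivity]).
  destruct (completeness E Hb Hne) as [s [Hup Hlub]].
  exists s. apply HS_from_sup; auto.
  - intros L HN. apply Hup. exists L; auto.
  - intros e He. apply NNPP. intros Hno.
    assert (is_upper_bound E (s - e)).
    { intros x [L [HN ->]]. apply Rnot_lt_le. intros Hlt. apply Hno. exists L; auto. }
    apply Hlub in H. lra.
Qed.

Lemma HS_compare {T} (f g : T -> R) G : (forall t, 0 <= f t) -> (forall t, f t <= g t) ->
  HS g G -> exists s, HS f s.
Proof.
  intros Hf Hfg Hg. apply (HS_bounded f G Hf). intros L HN.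
  apply Rle_trans with (Ssum g L). apply Ssum_le; auto.
  apply (HS_upper g); auto. intros t; specialize (Hf t); specialize (Hfg t); lra.
Qed.

Definition posp (x : R) := (Rabs x + x) / 2.
Definition negp (x : R) := (Rabs x - x) / 2.
Lemma posp_nn x : 0 <= posp x. Proof. unfold posp, Rabs; destruct (Rcase_abs x); lra. Qed.
Lemma negp_nn x : 0 <= negp x. Proof. unfold negp, Rabs; destruct (Rcase_abs x); lra. Qed.
Lemma posp_le x : posp x <= Rabs x. Proof. unfold posp, Rabs; destruct (Rcase_abs x); lra. Qed.
Lemma negp_le x : negp x <= Rabs x. Proof. unfold negp, Rabs; destruct (Rcase_abs x); lra. Qed.
Lemma pn_eq x : x = posp x - negp x. Proof. unfold posp, negp; lra. Qed.

Lemma HS_dom {T} (f g : T -> R) G : (forall t, Rabs (f t) <= g t) -> HS g G -> exists s, HS f s.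
Proof.
  intros Hd Hg.
  destruct (HS_compare (fun t => posp (f t)) g G) as [sp Hp]; auto.
  { intros; apply posp_nn. } { intros t; eapply Rle_trans; [apply posp_le|auto]. }
  destruct (HS_compare (fun t => negp (f t)) g G) as [sn Hn]; auto.
  { intros; apply negp_nn. } { intros t; eapply Rle_trans; [apply negp_le|auto]. }
  exists (sp - sn). eapply HS_ext; [|apply (HS_minus _ _ _ _ Hp Hn)].
  intros t; simpl; symmetry; apply pn_eq.
Qed.
Lemma HS_nonneg_val {T} (f : T -> R) s : (forall t, 0 <= f t) -> HS f s -> 0 <= s.
Proof. intros Hf Hs. apply (HS_upper f s Hf Hs []). constructor. Qed.

Lemma HS_prod_nn {I J} (f : I -> R) (g : J -> R) a b :
  (forall i, 0 <= f i) -> (forall j, 0 <= g j) -> HS f a -> HS g b ->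
  HS (fun p : I * J => f (fst p) * g (snd p)) (a * b).
Proof.
  intros Hf Hg Ha Hb.
  assert (Ha0 := HS_nonneg_val f a Hf Ha). assert (Hb0 := HS_nonneg_val g b Hg Hb).
  apply HS_from_sup.
  - intros [i j]; simpl. apply Rmult_le_pos; auto.
  - intros L HN.
    destruct (nodup_sup (map fst L)) as [A [HA HiA]].
    destruct (nodup_sup (map snd L)) as [B [HB HiB]].
    apply Rle_trans with (Ssum (fun p : I * J => f (fst p) * g (snd p)) (list_prod A B)).
    + apply Ssum_mono; auto.
      * intros [i j]; simpl; apply Rmult_le_pos; auto.
      * intros [i j] Hp. apply in_prod_iff. split.
        -- apply HiA. apply (in_map fst) in Hp; auto.
        -- apply HiB. apply (in_map snd) in Hp; auto.
    + rewrite Ssum_prod. apply Rmult_le_compat; try apply Ssum_nonneg; auto.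
      * apply (HS_upper f); auto.
      * apply (HS_upper g); auto.
  - intros e He. set (d := e / (a + b + 1)).
    assert (Hd : d > 0) by (unfold d; apply Rdiv_lt_0_compat; lra).
    destruct (HS_lower f a Ha d Hd) as [A [HA HAl]].
    destruct (HS_lower g b Hb d Hd) as [B [HB HBl]].
    exists (list_prod A B). split; [apply NoDup_prod; auto|].
    rewrite Ssum_prod.
    assert (HAu := HS_upper f a Hf Ha A HA). assert (HBu := HS_upper g b Hg Hb B HB).
    assert (HA0 := Ssum_nonneg f A Hf). assert (HB0 := Ssum_nonneg g B Hg).
    set (sA := Ssum f A) in *. set (sB := Ssum g B) in *.
    assert (E1 : a * b - sA * sB = a * (b - sB) + sB * (a - sA)) by ring.
    assert (E2 : a * (b - sB) <= a * d) by (apply Rmult_le_compat_l; lra).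
    assert (E3 : sB * (a - sA) <= b * d) by (apply Rmult_le_compat; lra).
    assert (E4 : (a + b) * d < e).
    { unfold d. apply Rmult_lt_reg_r with (a + b + 1); [lra|].
      replace ((a + b) * (e / (a + b + 1)) * (a + b + 1)) with ((a + b) * e) by (field; lra).
      nra. }
    lra.
Qed.

Lemma HS_prod {I J} (f : I -> R) (g : J -> R) F G Fs Gs a b :
  (forall i, Rabs (f i) <= F i) -> HS F Fs ->
  (forall j, Rabs (g j) <= G j) -> HS G Gs ->
  HS f a -> HS g b ->
  HS (fun p : I * J => f (fst p) * g (snd p)) (a * b).
Proof.
  intros HfF HF HgG HG Ha Hb.
  destruct (HS_compare (fun t => posp (f t)) F Fs) as [ap Hap]; auto.
  { intros; apply posp_nn. } { intros t; eapply Rle_trans; [apply posp_le|auto]. }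
  destruct (HS_compare (fun t => negp (f t)) F Fs) as [an Han]; auto.
  { intros; apply negp_nn. } { intros t; eapply Rle_trans; [apply negp_le|auto]. }
  destruct (HS_compare (fun t => posp (g t)) G Gs) as [bp Hbp]; auto.
  { intros; apply posp_nn. } { intros t; eapply Rle_trans; [apply posp_le|auto]. }
  destruct (HS_compare (fun t => negp (g t)) G Gs) as [bn Hbn]; auto.
  { intros; apply negp_nn. } { intros t; eapply Rle_trans; [apply negp_le|auto]. }
  assert (Ea : a = ap - an).
  { apply (HS_unique f); auto. eapply HS_ext; [|apply (HS_minus _ _ _ _ Hap Han)].
    intros t; simpl; symmetry; apply pn_eq. }
  assert (Eb : b = bp - bn).
  { apply (HS_unique g); auto. eapply HS_ext; [|apply (HS_minus _ _ _ _ Hbp Hbn)].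
    intros t; simpl; symmetry; apply pn_eq. }
  assert (P1 := HS_prod_nn _ _ _ _ (fun i => posp_nn (f i)) (fun j => posp_nn (g j)) Hap Hbp).
  assert (P2 := HS_prod_nn _ _ _ _ (fun i => posp_nn (f i)) (fun j => negp_nn (g j)) Hap Hbn).
  assert (P3 := HS_prod_nn _ _ _ _ (fun i => negp_nn (f i)) (fun j => posp_nn (g j)) Han Hbp).
  assert (P4 := HS_prod_nn _ _ _ _ (fun i => negp_nn (f i)) (fun j => negp_nn (g j)) Han Hbn).
  assert (Q := HS_plus _ _ _ _ (HS_minus _ _ _ _ (HS_minus _ _ _ _ P1 P2) P3) P4).
  rewrite Ea, Eb. eapply HS_ext; [|replace ((ap - an) * (bp - bn)) with (ap * bp - ap * bn - an * bp + an * bn) by ring; exact Q].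
  intros [i j]; simpl. transitivity ((posp (f i) - negp (f i)) * (posp (g j) - negp (g j))); [ring|rewrite <- !pn_eq; reflexivity].
Qed.
Lemma Ceq (z w : C) : Re z = Re w -> Im z = Im w -> z = w.
Proof. destruct z, w; simpl; intros -> ->; reflexivity. Qed.

Definition dom {T} (f : T -> C) := exists g G, HS g G /\
  forall t, Rabs (Re (f t)) <= g t /\ Rabs (Im (f t)) <= g t.

Lemma dom_sum {T} (f : T -> C) : dom f -> exists z, has_sum_C f z.
Proof.
  intros [g [G [HG Hd]]].
  destruct (HS_dom (fun t => Re (f t)) g G) as [a Ha]; [intros t; apply Hd|auto|].
  destruct (HS_dom (fun t => Im (f t)) g G) as [b Hb]; [intros t; apply Hd|auto|].
  exists (mkC a b). split; auto.
Qed.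

Lemma HSC_ext {T} (f g : T -> C) z : (forall t, f t = g t) -> has_sum_C f z -> has_sum_C g z.
Proof. intros H. replace g with f; auto. apply functional_extensionality; auto. Qed.

Lemma HSC_unique {T} (f : T -> C) a b : has_sum_C f a -> has_sum_C f b -> a = b.
Proof.
  intros [H1 H2] [H3 H4]. apply Ceq; [eapply HS_unique; eauto|eapply HS_unique; eauto].
Qed.

Lemma HSC_plus {T} (f g : T -> C) a b : has_sum_C f a -> has_sum_C g b ->
  has_sum_C (fun t => Cadd (f t) (g t)) (Cadd a b).
Proof. intros [H1 H2] [H3 H4]. split; simpl; apply HS_plus; auto. Qed.

Lemma HSC_zero {T} : has_sum_C (fun _ : T => C0) C0.
Proof. split; simpl; apply HS_zero. Qed.

Lemma HSC_Csum {T} n (F : nat -> T -> C) z : (forall k, (k < n)%nat -> has_sum_C (F k) (z k)) ->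
  has_sum_C (fun t => Csum n (fun k => F k t)) (Csum n z).
Proof.
  induction n; intros H; simpl.
  - apply HSC_zero.
  - apply (HSC_plus (fun t => Csum n (fun k => F k t)) (F n)); auto.
Qed.

Lemma HSC_prod {I J} (f : I -> C) (g : J -> C) a b : dom f -> dom g ->
  has_sum_C f a -> has_sum_C g b ->
  has_sum_C (fun p : I * J => Cmul (f (fst p)) (g (snd p))) (Cmul a b).
Proof.
  intros [F [Fs [HF Hf]]] [G [Gs [HG Hg]]] [Ha1 Ha2] [Hb1 Hb2].
  assert (Rr := HS_prod _ _ _ _ _ _ _ _ (fun i => proj1 (Hf i)) HF (fun j => proj1 (Hg j)) HG Ha1 Hb1).
  assert (Ri := HS_prod _ _ _ _ _ _ _ _ (fun i => proj2 (Hf i)) HF (fun j => proj2 (Hg j)) HG Ha2 Hb2).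
  assert (Rri := HS_prod _ _ _ _ _ _ _ _ (fun i => proj1 (Hf i)) HF (fun j => proj2 (Hg j)) HG Ha1 Hb2).
  assert (Rir := HS_prod _ _ _ _ _ _ _ _ (fun i => proj2 (Hf i)) HF (fun j => proj1 (Hg j)) HG Ha2 Hb1).
  split; simpl.
  - exact (HS_minus _ _ _ _ Rr Ri).
  - exact (HS_plus _ _ _ _ Rri Rir).
Qed.

Lemma Cnorm2_nn z : 0 <= Cnorm2 z.
Proof. unfold Cnorm2; nra. Qed.

Lemma l2_zero {I} : l2 (fun _ : I => C0).
Proof. exists 0. eapply HS_ext; [|apply HS_zero]. intros; unfold Cnorm2; simpl; ring. Qed.

Lemma l2_add {I} (u v : I -> C) : l2 u -> l2 v -> l2 (fun i => Cadd (u i) (v i)).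
Proof.
  intros [a Ha] [b Hb].
  assert (H := HS_plus _ _ _ _ (HS_scal _ 2 _ Ha) (HS_scal _ 2 _ Hb)).
  destruct (HS_compare (fun i => Cnorm2 (Cadd (u i) (v i))) (fun i => 2 * Cnorm2 (u i) + 2 * Cnorm2 (v i)) (2 * a + 2 * b) (fun i => Cnorm2_nn _)) as [s Hs].
  { intros i; unfold Cnorm2; simpl; destruct (u i) as [x1 y1], (v i) as [x2 y2]; simpl; pose proof (Rle_0_sqr (x1 - x2)); pose proof (Rle_0_sqr (y1 - y2)); unfold Rsqr in *; lra. }
  { exact H. }
  - exists s; auto.
Qed.

Lemma l2_scal {I} c (u : I -> C) : l2 u -> l2 (fun i => Cmul c (u i)).
Proof.
  intros [a Ha]. exists (Cnorm2 c * a). eapply HS_ext; [|apply (HS_scal _ (Cnorm2 c) _ Ha)].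
  intros i; unfold Cnorm2; destruct c, (u i); simpl; ring.
Qed.

Lemma l2_Csum {I} n (c : nat -> C) (w : nat -> I -> C) : (forall k, (k < n)%nat -> l2 (w k)) ->
  l2 (fun x => Csum n (fun k => Cmul (c k) (w k x))).
Proof.
  induction n; intros H; simpl.
  - apply l2_zero.
  - apply (l2_add (fun x => Csum n (fun k => Cmul (c k) (w k x)))); auto.
    apply l2_scal; auto.
Qed.

Lemma dom_inner {I} (u w : I -> C) : l2 u -> l2 w -> dom (fun i => Cmul (Cconj (u i)) (w i)).
Proof.
  intros [a Ha] [b Hb]. exists (fun i => Cnorm2 (u i) + Cnorm2 (w i)), (a + b).
  split; [apply HS_plus; auto|].
  intros i; unfold Cnorm2; destruct (u i) as [x y], (w i) as [p q]; simpl.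
  pose proof (Rle_0_sqr (x - p)); pose proof (Rle_0_sqr (x + p));
  pose proof (Rle_0_sqr (y - q)); pose proof (Rle_0_sqr (y + q));
  pose proof (Rle_0_sqr (x - q)); pose proof (Rle_0_sqr (x + q));
  pose proof (Rle_0_sqr (y - p)); pose proof (Rle_0_sqr (y + p)); unfold Rsqr in *.
  split; apply Rabs_le; split; lra.
Qed.

Lemma proj_zero {I} (P : op I) : is_projection P -> forall i, P (fun _ => C0) i = C0.
Proof.
  intros [_ [_ [Hh _]]] i.
  assert (E := Hh C0 (fun _ => C0) l2_zero i). cbv beta in E.
  replace (fun _ : I => Cmul C0 C0) with (fun _ : I => C0) in E.
  - rewrite E. apply Ceq; simpl; ring.
  - apply functional_extensionality; intros; apply Ceq; simpl; ring.
Qed.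

Lemma proj_lin {I} (P : op I) n (c : nat -> C) (w : nat -> I -> C) : is_projection P ->
  (forall k, (k < n)%nat -> l2 (w k)) -> forall i,
  P (fun x => Csum n (fun k => Cmul (c k) (w k x))) i = Csum n (fun k => Cmul (c k) (P (w k) i)).
Proof.
  intros HP. induction n; intros Hw i; simpl.
  - apply proj_zero; auto.
  - destruct HP as [Hl [Ha [Hh _]]].
    rewrite (Ha (fun x => Csum n (fun k => Cmul (c k) (w k x))) (fun x => Cmul (c n) (w n x))).
    + rewrite Hh by auto. rewrite IHn; auto.
    + apply l2_Csum; auto.
    + apply l2_scal; auto.
Qed.

Lemma Csum_ext n (f g : nat -> C) : (forall k, f k = g k) -> Csum n f = Csum n g.
Proof. intros H; replace g with f; auto; apply functional_extensionality; auto. Qed.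

Lemma Cconj_Csum n f : Cconj (Csum n f) = Csum n (fun k => Cconj (f k)).
Proof. induction n; simpl; [apply Ceq; simpl; ring|]. rewrite <- IHn. apply Ceq; simpl; ring. Qed.

Lemma Cmul_Csum_l n f z : Cmul (Csum n f) z = Csum n (fun k => Cmul (f k) z).
Proof. induction n; simpl; [apply Ceq; simpl; ring|]. rewrite <- IHn. apply Ceq; simpl; ring. Qed.

Lemma Cmul_Csum_r n f z : Cmul z (Csum n f) = Csum n (fun k => Cmul z (f k)).
Proof. induction n; simpl; [apply Ceq; simpl; ring|]. rewrite <- IHn. apply Ceq; simpl; ring. Qed.

Fixpoint Rsum (n : nat) (f : nat -> R) : R :=
  match n with O => 0 | S m => Rsum m f + f m end.

Lemma Re_Csum n f : Re (Csum n f) = Rsum n (fun k => Re (f k)).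
Proof. induction n; simpl; auto. rewrite IHn; auto. Qed.
Definition Kr m (M : nat -> nat -> R) :=
  exists a b : nat -> nat -> R, forall x y, M x y = Rsum m (fun t => a t x * b t y).

Lemma Rsum_ext n f g : (forall k, (k < n)%nat -> f k = g k) -> Rsum n f = Rsum n g.
Proof. induction n; intros H; simpl; auto. rewrite IHn, H; auto. Qed.

Lemma Rsum_split m n f : Rsum (m + n) f = Rsum m f + Rsum n (fun t => f (m + t)%nat).
Proof.
  induction n; simpl.
  - rewrite Nat.add_0_r; ring.
  - rewrite Nat.add_succ_r; simpl. rewrite IHn; ring.
Qed.

Lemma Kr_ext m M M' : (forall x y, M x y = M' x y) -> Kr m M -> Kr m M'.
Proof. intros E [a [b H]]. exists a, b. intros; rewrite <- E; auto. Qed.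

Lemma Kr_add m m' M M' : Kr m M -> Kr m' M' -> Kr (m + m') (fun x y => M x y + M' x y).
Proof.
  intros [a [b H]] [a' [b' H']].
  exists (fun t => if Nat.ltb t m then a t else a' (t - m)%nat),
         (fun t => if Nat.ltb t m then b t else b' (t - m)%nat).
  intros x y. rewrite Rsum_split, H, H'. f_equal.
  - apply Rsum_ext; intros k Hk. apply Nat.ltb_lt in Hk. rewrite Hk. auto.
  - apply Rsum_ext; intros k Hk.
    assert (Nat.ltb (m + k) m = false) by (apply Nat.ltb_ge; lia).
    rewrite H0. replace (m + k - m)%nat with k by lia. auto.
Qed.

Lemma Kr_zero : Kr 0 (fun _ _ => 0).
Proof. exists (fun _ _ => 0), (fun _ _ => 0). intros; simpl; auto. Qed.

Lemma Kr_one (al be : nat -> R) : Kr 1 (fun x y => al x * be y).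
Proof. exists (fun _ => al), (fun _ => be). intros; simpl; ring. Qed.

Lemma Kr_mul (al be : nat -> C) : exists m, Kr m (fun x y => Re (Cmul (al x) (be y))).
Proof.
  exists (1 + 1)%nat. eapply Kr_ext; [|apply (Kr_add _ _ _ _ (Kr_one (fun x => Re (al x)) (fun y => Re (be y)))
     (Kr_one (fun x => - Im (al x)) (fun y => Im (be y))))].
  intros x y; simpl; ring.
Qed.

Lemma Kr_Csum n (F : nat -> nat -> nat -> C) :
  (forall k, exists m, Kr m (fun x y => Re (F k x y))) ->
  exists m, Kr m (fun x y => Re (Csum n (fun k => F k x y))).
Proof.
  intros H. induction n; simpl.
  - exists 0%nat. eapply Kr_ext; [|apply Kr_zero]. intros; simpl; auto.
  - destruct IHn as [m1 H1]. destruct (H n) as [m2 H2].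
    exists (m1 + m2)%nat. eapply Kr_ext; [|apply (Kr_add _ _ _ _ H1 H2)].
    intros; simpl; auto.
Qed.

Definition Csumv {T} (f : T -> C) : C := myeps C0 (has_sum_C f).

Lemma Csumv_spec {T} (f : T -> C) : dom f -> has_sum_C f (Csumv f).
Proof. intros H. unfold Csumv. apply myeps_spec. apply dom_sum; auto. Qed.

Lemma finite_rank_Kr {I J : Type} (psi : I * J -> C) A B p :
  produces 4 3 psi A B p -> finite_schmidt_rank psi ->
  exists m, Kr m (fun x y => p x y 0%nat 0%nat).
Proof.
  intros [Hu [[HAp HAs] [[HBp HBs] Hval]]] [r [u [v [Hl2 Hpsi]]]].
  set (al := fun k l x => Csumv (fun i => Cmul (Cconj (u k i)) (A x 0%nat (u l) i))).
  set (be := fun k l y => Csumv (fun j => Cmul (Cconj (v k j)) (B y 0%nat (v l) j))).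
  assert (Claim : forall x y, mkC (p x y 0%nat 0%nat) 0 =
     Csum r (fun k => Csum r (fun l => Cmul (al k l x) (be k l y)))).
  { intros x y.
    assert (PA : is_projection (A x 0%nat)) by (apply HAp; lia).
    assert (PB : is_projection (B y 0%nat)) by (apply HBp; lia).
    specialize (Hval x y 0%nat 0%nat ltac:(lia) ltac:(lia)).
    unfold inner in Hval.
    eapply HSC_unique; [exact Hval|].
    eapply HSC_ext; [|apply (HSC_Csum r (fun k t => Csum r (fun l =>
        Cmul (Cmul (Cconj (u k (fst t))) (A x 0%nat (u l) (fst t)))
             (Cmul (Cconj (v k (snd t))) (B y 0%nat (v l) (snd t))))))].
    - intros [i j]. simpl.
      unfold tensor_apply; simpl.
      assert (E1 : (fun i' => B y 0%nat (fun j' => psi (i', j')) j) =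
                   (fun i' => Csum r (fun k => Cmul (B y 0%nat (v k) j) (u k i')))).
      { apply functional_extensionality; intros i'.
        replace (fun j' => psi (i', j')) with (fun j' => Csum r (fun k => Cmul (u k i') (v k j'))).
        2:{ apply functional_extensionality; intros j'; rewrite Hpsi; auto. }
        rewrite (proj_lin _ r (fun k => u k i') v PB).
        - apply Csum_ext; intros k; apply Ceq; simpl; ring.
        - intros k Hk; apply Hl2; auto. }
      rewrite E1. rewrite (proj_lin _ r (fun k => B y 0%nat (v k) j) u PA).
      2:{ intros k Hk; apply Hl2; auto. }
      rewrite Hpsi, Cconj_Csum, Cmul_Csum_l. apply Csum_ext; intros k.
      rewrite Cmul_Csum_r. apply Csum_ext; intros l.
      apply Ceq; simpl; ring.
    - intros k Hk. apply (HSC_Csum r (fun l t =>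
        Cmul (Cmul (Cconj (u k (fst t))) (A x 0%nat (u l) (fst t)))
             (Cmul (Cconj (v k (snd t))) (B y 0%nat (v l) (snd t))))).
      intros l Hl.
      assert (Hul := proj1 (Hl2 l Hl)). assert (Huk := proj1 (Hl2 k Hk)).
      assert (Hvl := proj2 (Hl2 l Hl)). assert (Hvk := proj2 (Hl2 k Hk)).
      assert (DA : dom (fun i => Cmul (Cconj (u k i)) (A x 0%nat (u l) i))).
      { apply dom_inner; auto. apply PA; auto. }
      assert (DB : dom (fun j => Cmul (Cconj (v k j)) (B y 0%nat (v l) j))).
      { apply dom_inner; auto. apply PB; auto. }
      apply (HSC_prod (fun i => Cmul (Cconj (u k i)) (A x 0%nat (u l) i))
                      (fun j => Cmul (Cconj (v k j)) (B y 0%nat (v l) j))); auto;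
        apply Csumv_spec; auto. }
  destruct (Kr_Csum r (fun k x y => Csum r (fun l => Cmul (al k l x) (be k l y)))) as [m Hm].
  { intros k. apply (Kr_Csum r (fun l x y => Cmul (al k l x) (be k l y))).
    intros l. apply (Kr_mul (al k l) (be k l)). }
  exists m. eapply Kr_ext; [|exact Hm]. intros x y. simpl. rewrite <- Claim. reflexivity.
Qed.
Definition hh (i : nat) : R := (/2) ^ i.

Lemma hh_pos i : 0 < hh i.
Proof. unfold hh. apply pow_lt. lra. Qed.

Lemma Ssum_seq_bound k N : Ssum hh (seq k N) <= 2 * hh k.
Proof.
  revert k; induction N; intros k; simpl.
  - rewrite Ssum_nil. pose proof (hh_pos k); lra.
  - rewrite Ssum_cons. specialize (IHN (S k)).
    assert (hh (S k) = /2 * hh k) by (unfold hh; simpl; ring). lra.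
Qed.

Lemma list_nat_bound (L : list nat) : exists N, forall x, In x L -> (x < N)%nat.
Proof.
  induction L as [|a L [N HN]].
  - exists 0%nat; intros x [].
  - exists (S (Nat.max a N)). intros x [<-|Hx]; [lia|]. specialize (HN x Hx); lia.
Qed.

Lemma hh_summable : exists s, HS hh s.
Proof.
  apply (HS_bounded hh 2). { intros; apply Rlt_le, hh_pos. }
  intros L HN. destruct (list_nat_bound L) as [N HNb].
  apply Rle_trans with (Ssum hh (seq 0 N)).
  - apply Ssum_mono; auto. { intros; apply Rlt_le, hh_pos. }
    intros x Hx. apply in_seq. specialize (HNb x Hx); lia.
  - eapply Rle_trans; [apply Ssum_seq_bound|]. unfold hh; simpl; lra.
Qed.

Definition cc0 (ij : nat * nat) : R := if Nat.eqb (fst ij) (snd ij) then hh (fst ij) else 0.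

Lemma cc0_summable : exists S0, HS (fun ij => cc0 ij * cc0 ij) S0.
Proof.
  destruct hh_summable as [s Hs].
  assert (Hp := HS_prod_nn hh hh s s (fun i => Rlt_le _ _ (hh_pos i)) (fun i => Rlt_le _ _ (hh_pos i)) Hs Hs).
  apply (HS_compare (fun ij => cc0 ij * cc0 ij) (fun p : nat * nat => hh (fst p) * hh (snd p)) (s * s) (fun t => Rle_0_sqr (cc0 t))); [|exact Hp].
  intros t. destruct t as [i j]; unfold cc0; simpl.
  destruct (Nat.eqb i j) eqn:E.
  - apply Nat.eqb_eq in E; subst; lra.
  - pose proof (hh_pos i); pose proof (hh_pos j); nra.
Qed.

Definition S0 : R := myeps 0 (HS (fun ij => cc0 ij * cc0 ij)).

Lemma S0_spec : HS (fun ij => cc0 ij * cc0 ij) S0.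
Proof. unfold S0; apply myeps_spec, cc0_summable. Qed.

Lemma S0_pos : 0 < S0.
Proof.
  assert (H := HS_upper _ _ (fun t => Rle_0_sqr (cc0 t)) S0_spec [(0%nat, 0%nat)] ltac:(repeat constructor; auto)).
  rewrite Ssum_cons, Ssum_nil in H. unfold cc0, hh in H; simpl in H. unfold Rsqr in H. lra.
Qed.

Definition cc (ij : nat * nat) : R := cc0 ij / sqrt S0.
Definition psi0 (ij : nat * nat) : C := mkC (cc ij) 0.

Lemma cc_sq ij : cc ij * cc ij = / S0 * (cc0 ij * cc0 ij).
Proof.
  unfold cc. pose proof S0_pos. assert (Hs := sqrt_sqrt S0 ltac:(lra)).
  assert (sqrt S0 <> 0) by (apply Rgt_not_eq, sqrt_lt_R0; lra).
  replace (/ S0) with (/ (sqrt S0 * sqrt S0)) by (rewrite Hs; reflexivity). field. auto.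
Qed.

Lemma psi0_unit : unit_vector psi0.
Proof.
  unfold unit_vector. pose proof S0_pos.
  replace 1 with (/ S0 * S0) by (field; lra).
  eapply HS_ext; [|apply (HS_scal _ (/ S0) _ S0_spec)].
  intros t; unfold psi0, Cnorm2; simpl. rewrite cc_sq; ring.
Qed.

Definition mult (m : nat -> R) : op nat := fun u i => Cmul (mkC (m i) 0) (u i).

Lemma mult_proj m : (forall i, m i = 0 \/ m i = 1) -> is_projection (mult m).
Proof.
  intros Hm. unfold is_projection, mult. split; [|split; [|split; [|split]]].
  - intros u [a Ha].
    destruct (HS_compare (fun i => Cnorm2 (Cmul (mkC (m i) 0) (u i))) (fun i => Cnorm2 (u i)) a) as [s Hs]; auto.
    + intros; apply Cnorm2_nn.
    + intros i; unfold Cnorm2; destruct (Hm i) as [E|E]; rewrite E; simpl; nra.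
    + exists s; auto.
  - intros; apply Ceq; simpl; ring.
  - intros; apply Ceq; simpl; ring.
  - intros u _ i; destruct (Hm i) as [E|E]; rewrite E; apply Ceq; simpl; ring.
  - intros u v z _ _ H. eapply HSC_ext; [|exact H]. intros i; apply Ceq; simpl; ring.
Qed.

Definition mvals (x a i : nat) : R :=
  if Nat.eqb a 0 then (if Nat.eqb i x then 1 else 0)
  else if Nat.eqb a 1 then (if Nat.eqb i x then 0 else 1) else 0.

Definition Aop (x a : nat) : op nat := mult (mvals x a).

Lemma mvals_01 x a i : mvals x a i = 0 \/ mvals x a i = 1.
Proof. unfold mvals. destruct (Nat.eqb a 0), (Nat.eqb a 1), (Nat.eqb i x); auto. Qed.

Lemma mvals_bnd x a i : 0 <= mvals x a i <= 1.
Proof. destruct (mvals_01 x a i) as [E|E]; rewrite E; lra. Qed.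

Lemma PVM_Aop n : (n = 3 \/ n = 4)%nat -> PVM_family n Aop.
Proof.
  intros Hn. split.
  - intros; apply mult_proj, mvals_01.
  - intros x u _ i. unfold Aop, mult, mvals.
    destruct Hn as [->| ->]; simpl; destruct (Nat.eqb i x); apply Ceq; simpl; ring.
Qed.

Definition pf (x y a b : nat) (ij : nat * nat) : R :=
  Re (Cmul (Cconj (psi0 ij)) (tensor_apply (Aop x a) (Aop y b) psi0 ij)).

Lemma pf_eq x y a b i j : pf x y a b (i, j) = cc (i, j) * cc (i, j) * (mvals x a i * mvals y b j).
Proof. unfold pf, tensor_apply, Aop, mult, psi0; simpl. ring. Qed.

Definition pp (x y a b : nat) : R := myeps 0 (HS (pf x y a b)).

Lemma pp_spec x y a b : HS (pf x y a b) (pp x y a b).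
Proof.
  unfold pp; apply myeps_spec.
  apply (HS_dom _ (fun ij => Cnorm2 (psi0 ij)) 1); [|apply psi0_unit].
  intros [i j]. rewrite pf_eq. unfold Cnorm2, psi0; simpl.
  pose proof (mvals_bnd x a i); pose proof (mvals_bnd y b j).
  assert (H1 : 0 <= cc (i,j) * cc (i,j)) by apply Rle_0_sqr.
  assert (H2 : 0 <= mvals x a i * mvals y b j) by (apply Rmult_le_pos; lra).
  assert (H3 : mvals x a i * mvals y b j <= 1).
  { replace 1 with (1 * 1) by ring. apply Rmult_le_compat; lra. }
  rewrite Rabs_pos_eq by (apply Rmult_le_pos; auto).
  assert (cc (i,j) * cc (i,j) * (mvals x a i * mvals y b j) <= cc (i,j) * cc (i,j) * 1)
    by (apply Rmult_le_compat_l; auto). lra.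
Qed.

Lemma pp_Cqs : C_qs 4 3 pp.
Proof.
  exists nat, nat, psi0, Aop, Aop. split; [apply psi0_unit|].
  split; [apply PVM_Aop; auto|]. split; [apply PVM_Aop; auto|].
  intros x y a b _ _. split; simpl.
  - apply pp_spec.
  - eapply HS_ext; [|apply (@HS_zero (nat * nat))].
    intros [i j]; unfold tensor_apply, Aop, mult, psi0; simpl. ring.
Qed.

Lemma HS_single {T} (f : T -> R) t0 v : (forall t, t <> t0 -> f t = 0) -> f t0 = v -> HS f v.
Proof.
  intros Hz Hv e He. exists [t0]. intros L HN Hi. fS.
  assert (Ht0 : In t0 L) by (apply Hi; left; auto).
  destruct (in_split _ _ Ht0) as [l1 [l2 E]]. subst L.
  destruct (NoDup_remove _ _ _ HN) as [_ Hn].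
  rewrite Ssum_app, Ssum_cons, (Ssum_zero f l1), (Ssum_zero f l2).
  - apply Rabs_lt_iff; lra.
  - intros t Ht; apply Hz; intros ->; apply Hn, in_or_app; auto.
  - intros t Ht; apply Hz; intros ->; apply Hn, in_or_app; auto.
Qed.

Definition dd (x : nat) : R := hh x * hh x / S0.

Lemma dd_nz x : dd x <> 0.
Proof. unfold dd. pose proof (hh_pos x); pose proof S0_pos. apply Rgt_not_eq. apply Rdiv_lt_0_compat; nra. Qed.

Lemma pp_00 x y : pp x y 0%nat 0%nat = if Nat.eqb x y then dd x else 0.
Proof.
  apply (HS_unique (pf x y 0%nat 0%nat)); [apply pp_spec|].
  destruct (Nat.eqb x y) eqn:Exy.
  - apply Nat.eqb_eq in Exy; subst y.
    apply (HS_single _ (x, x)).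
    + intros [i j] Hne. rewrite pf_eq. unfold mvals; simpl.
      destruct (Nat.eqb i x) eqn:Ei, (Nat.eqb j x) eqn:Ej; try ring.
      apply Nat.eqb_eq in Ei; apply Nat.eqb_eq in Ej; subst; congruence.
    + rewrite pf_eq. unfold mvals; simpl. rewrite Nat.eqb_refl.
      rewrite cc_sq. unfold cc0, dd; simpl. rewrite Nat.eqb_refl. field. pose proof S0_pos; lra.
  - apply (HS_ext (fun _ => 0)); [|apply HS_zero].
    intros [i j]. rewrite pf_eq. unfold mvals; simpl.
    destruct (Nat.eqb i x) eqn:Ei, (Nat.eqb j y) eqn:Ej; try ring.
    apply Nat.eqb_eq in Ei; apply Nat.eqb_eq in Ej; subst.
    rewrite cc_sq. unfold cc0; simpl. rewrite Exy. ring.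
Qed.

Module LA.
From mathcomp Require Import all_boot all_algebra Rstruct.
Import GRing.Theory.
Local Open Scope ring_scope.

Lemma Rsum_big n f : Rsum n f = \sum_(i < n) f i.
Proof.
elim: n => [|n IH] /=; first by rewrite big_ord0.
by rewrite big_ord_recr /= IH.
Qed.

Lemma la_main (m : nat) (a b : nat -> nat -> R) (d : nat -> R) :
  (forall x, d x <> 0%R) ->
  ~ (forall x y, Rsum m (fun t => (a t x * b t y)%R) = if Nat.eqb x y then d x else 0%R).
Proof.
move=> dn H.
pose A : 'M[R]_(m.+1, m) := \matrix_(x, t) a t x.
pose B : 'M[R]_(m, m.+1) := \matrix_(t, y) b t y.
pose M : 'M[R]_(m.+1) := diag_mx (\row_(i < m.+1) (d i)^-1).
have E : M *m (A *m B) *m 1%:M = 1%:M.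
  rewrite mulmx1 mul_diag_mx; apply/matrixP => i j.
  rewrite !mxE.
  have -> : \sum_(k < m) A i k * B k j = Rsum m (fun t => (a t i * b t j)%R).
    by rewrite Rsum_big; apply: eq_bigr => k _; rewrite !mxE.
  rewrite H.
  case: (eqVneq i j) => [<-|nij].
    rewrite Nat.eqb_refl /= mulVf //; apply/eqP; exact: dn.
  have -> : Nat.eqb i j = false.
    apply/Nat.eqb_neq => e; move: nij; have -> : i = j by apply: val_inj; exact: e. by rewrite eqxx.
  by rewrite mulr0.
have := mulmx1_min_rank E.
have := mulmx_max_rank A B.
move=> h1 h2. have := leq_trans h2 h1. by rewrite ltnn.
Qed.
End LA.

Lemma la (m : nat) (a b : nat -> nat -> R) (d : nat -> R) :
  (forall x, d x <> 0) ->
  ~ (forall x y, Rsum m (fun t => a t x * b t y) = if Nat.eqb x y then d x else 0).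
Proof. exact (LA.la_main m a b d). Qed.

Theorem corollary2 : ~ (forall p : nat -> nat -> nat -> nat -> R, C_q 4 3 p <-> C_qs 4 3 p).
Proof.
  intros H. destruct (proj2 (H pp) pp_Cqs) as [I [J [psi [A [B [Hp Hf]]]]]].
  destruct (finite_rank_Kr psi A B pp Hp Hf) as [m [a [b Hk]]].
  apply (la m a b dd dd_nz). intros x y. rewrite <- Hk. apply pp_00.
Qed.
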